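(* Let $\{a_n\}_{n=1}^\infty\subset(0,1]$ and define $P_n,Q_n:\{-1,1\}^n\to\mathbb{R}$ by $P_0\equiv Q_0\equiv 1$ and \[ P_{n+1}=P_n+\varepsilon_{n+1}a_{n+1}Q_n,\qquad Q_{n+1}=\varepsilon_{n+1}a_{n+1}P_n-Q_n,\qquad n=0,1,\dots \] Then for all $n=1,2,\dots$, the function $|P_n|^2+|Q_n|^2$ is constant, with \[ |P_n|^2+|Q_n|^2\equiv 2\prod_{i=1}^n(1+a_i^2), \] \[ \|P_n\|_2=\|Q_n\|_2=\prod_{i=1}^n(1+a_i^2)^{1/2}, \] \[ \prod_{i=1}^n(1+a_i^2)^{1/2}\le\|P_n\|_\infty,\ \|Q_n\|_\infty\le\sqrt{2}\prod_{i=1}^n(1+a_i^2)^{1/2}, \] and for each $A\subseteq[n]$, \[ \hat P_n(A)^2=\hat Q_n(A)^2=\prod_{i\in A}a_i^2. \]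
   Context: Equip $\{-1,1\}^n$ with the uniform probability measure; $\|g\|_2^2=2^{-n}\sum_{\delta}|g(\delta)|^2$ and $\|g\|_\infty=\max_\delta|g(\delta)|$. Here $\varepsilon_i$ denotes the $i$-th coordinate function $\varepsilon_i(\delta_1,\dots,\delta_m)=\delta_i$ (a function on $\{-1,1\}^m$ for any $m\ge i$; functions on $\{-1,1\}^n$ are regarded as functions on $\{-1,1\}^{n+1}$ not depending on the last coordinate). For $A\subseteq[n]=\{1,\dots,n\}$, $W_A=\prod_{i\in A}\varepsilon_i$ and $\hat g(A)=2^{-n}\sum_{\delta\in\{-1,1\}^n}g(\delta)W_A(\delta)$. *)

(* Defs.v *)
From mathcomp Require Import all_boot all_order all_algebra.
Set Implicit Arguments. Unset Strict Implicit. Unset Printing Implicit Defensive.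
Import Order.TTheory GRing.Theory Num.Theory.
Local Open Scope ring_scope.

(* A point delta of {-1,1}^n is encoded as d : {ffun 'I_n -> bool};
   coordinate i (1 <= i <= n, paper indexing) is d (i-1), with
   true <-> -1 and false <-> +1. *)
Definition cube (n : nat) := {ffun 'I_n -> bool}.

Definition sgn {R : rcfType} (b : bool) : R := if b then -1 else 1.

(* extension of d to an infinite sequence of coordinates indexed from 1
   (coordinates > n set to +1; P_n, Q_n never look at them) *)
Definition ext (n : nat) (d : cube n) : nat -> bool :=
  fun i => match i with
           | 0 => false
           | k.+1 => if (insub k : option 'I_n) is Some j then d j else false
           end.

Fixpoint PQ {R : rcfType} (a : nat -> R) (n : nat) (e : nat -> bool) : R * R :=
  match n with
  | 0 => (1, 1)
  | m.+1 => let p := (PQ a m e).1 in let q := (PQ a m e).2 in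
            (p + sgn (e m.+1) * a m.+1 * q, sgn (e m.+1) * a m.+1 * p - q)
  end.

Definition P {R : rcfType} (a : nat -> R) (n : nat) (d : cube n) : R := (PQ a n (ext d)).1.
Definition Q {R : rcfType} (a : nat -> R) (n : nat) (d : cube n) : R := (PQ a n (ext d)).2.

Definition norm2 {R : rcfType} (n : nat) (g : cube n -> R) : R :=
  Num.sqrt ((2 ^+ n)^-1 * \sum_(d : cube n) `|g d| ^+ 2).

Definition norminf {R : rcfType} (n : nat) (g : cube n -> R) : R :=
  \big[Num.max/0]_(d : cube n) `|g d|.

(* Walsh function W_A = prod_{i in A} eps_i (A given as a subset of 'I_n,
   i.e. paper index i+1) *)
Definition walsh {R : rcfType} (n : nat) (A : {set 'I_n}) (d : cube n) : R :=
  \prod_(i in A) sgn (d i).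

Definition fourier {R : rcfType} (n : nat) (g : cube n -> R) (A : {set 'I_n}) : R :=
  (2 ^+ n)^-1 * \sum_(d : cube n) g d * walsh A d.

(* Main.v *)
Require Import Defs.
From mathcomp Require Import all_boot all_order all_algebra.
From mathcomp Require Import ring lra zify.
Import Order.TTheory GRing.Theory Num.Theory.
Set Implicit Arguments. Unset Strict Implicit. Unset Printing Implicit Defensive.
Local Open Scope ring_scope.

Section S.
Variable R : rcfType.
Variable a : nat -> R.

Definition ext1 n (d : cube n) (b : bool) : cube n.+1 :=
  [ffun i : 'I_n.+1 => if unlift ord_max i is Some j then d j else b].
Definition restr n (d : cube n.+1) : cube n := [ffun j => d (lift ord_max j)].

Lemma ext_ext1 n (d : cube n) b i :
  ext (ext1 d b) i = if i == n.+1 then b else ext d i.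
Proof.
case: i => [|k] //=.
case: (ltngtP k n) => Hk.
- have Hk1 : (k < n.+1)%N by lia.
  rewrite (insubT (fun x => x < n.+1)%N Hk1) (insubT (fun x => x < n)%N Hk) /= ffunE.
  have -> : Sub k Hk1 = lift ord_max (Ordinal Hk) :> 'I_n.+1.
    by apply: val_inj; rewrite /= /bump leqNgt Hk.
  by rewrite liftK; have -> : (k.+1 == n.+1) = false by apply/eqP; lia.
- rewrite insubF; last by apply/negbTE; rewrite -leqNgt; lia.
  rewrite insubF; last by apply/negbTE; rewrite -leqNgt; lia.
  by case: eqP => //; lia.
- subst k. rewrite (insubT (fun x => x < n.+1)%N (ltnSn n)) /= ffunE eqxx.
  have -> : Sub n (ltnSn n) = ord_max :> 'I_n.+1 by apply: val_inj.
  by rewrite unlift_none.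
Qed.

Lemma PQ_ext m e e' : (forall i, (0 < i <= m)%N -> e i = e' i) ->
  PQ a m e = PQ a m e'.
Proof.
elim: m => //= m IH H.
rewrite IH ?H //; first by lia.
move=> i Hi; apply: H; lia.
Qed.

Lemma PQ_ext1 n (d : cube n) b : PQ a n.+1 (ext (ext1 d b)) =
  ((PQ a n (ext d)).1 + sgn b * a n.+1 * (PQ a n (ext d)).2,
   sgn b * a n.+1 * (PQ a n (ext d)).1 - (PQ a n (ext d)).2).
Proof.
have E : ext (ext1 d b) n.+1 = b by rewrite ext_ext1 eqxx.
move: E; rewrite /= => ->.
rewrite (@PQ_ext n (ext (ext1 d b)) (ext d)) //.
move=> i Hi; rewrite ext_ext1; case: eqP => //; lia.
Qed.

Lemma sum_cubeS n (F : cube n.+1 -> R) :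
  \sum_(d : cube n.+1) F d = \sum_(d : cube n) (F (ext1 d true) + F (ext1 d false)).
Proof.
rewrite (reindex (fun p : cube n * bool => ext1 p.1 p.2)) /=.
  rewrite -(pair_big predT predT (fun d b => F (ext1 d b))) /=.
  by apply: eq_bigr => d _; rewrite big_bool.
exists (fun d => (restr d, d ord_max)) => [[d b] _ | d _] /=.
  congr pair.
    by apply/ffunP => j; rewrite !ffunE liftK.
  by rewrite ffunE unlift_none.
apply/ffunP => i; rewrite !ffunE.
by case: unliftP => [j ->|->]; rewrite ?ffunE.
Qed.

Lemma PQ_sq m e : (PQ a m e).1 ^+ 2 + (PQ a m e).2 ^+ 2 =
  2 * \prod_(1 <= i < m.+1) (1 + a i ^+ 2).
Proof.
elim: m => [|m IH] /=; first by rewrite big_geq //; ring.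
rewrite big_nat_recr //= mulrA -IH.
by case: (e m.+1); rewrite /sgn; ring.
Qed.

Let T m := \prod_(1 <= i < m.+1) (1 + a i ^+ 2).

Lemma sumsq n : \sum_(d : cube n) (P a d) ^+ 2 = 2 ^+ n * T n /\
                \sum_(d : cube n) (Q a d) ^+ 2 = 2 ^+ n * T n.
Proof.
elim: n => [|n [IHP IHQ]].
  rewrite /T big_geq // /P /Q.
  rewrite (big_pred1 [ffun i : 'I_0 => false]); last first.
    by move=> d; symmetry; apply/eqP/ffunP => -[].
  by rewrite /=; split; ring.
rewrite /T big_nat_recr //= -/(T n).
rewrite !sum_cubeS.
split.
  transitivity (\sum_(d : cube n) (2 * (P a d)^+2 + (2 * a n.+1 ^+ 2) * (Q a d)^+2)).
    by apply: eq_bigr => d _; rewrite /P /Q !PQ_ext1 /sgn /=; ring.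
  by rewrite big_split /= -!mulr_sumr IHP IHQ [2 ^+ n.+1]exprS; ring.
transitivity (\sum_(d : cube n) ((2 * a n.+1 ^+ 2) * (P a d)^+2 + 2 * (Q a d)^+2)).
  by apply: eq_bigr => d _; rewrite /P /Q !PQ_ext1 /sgn /=; ring.
by rewrite big_split /= -!mulr_sumr IHP IHQ [2 ^+ n.+1]exprS; ring.
Qed.

Definition restrA n (A : {set 'I_n.+1}) : {set 'I_n} := [set j | lift ord_max j \in A].

Lemma prod_split n (A : {set 'I_n.+1}) (f : 'I_n.+1 -> R) :
  \prod_(i in A) f i = \prod_(j in restrA A) f (lift ord_max j) *
     (if ord_max \in A then f ord_max else 1).
Proof.
rewrite big_mkcond big_ord_recr /= [in RHS]big_mkcond /=.
congr (_ * _); apply: eq_bigr => j _; rewrite inE.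
by have -> : widen_ord (leqnSn n) j = lift ord_max j by apply: val_inj; rewrite /= /bump leqNgt ltn_ord.
Qed.

Lemma walsh_ext1 n (A : {set 'I_n.+1}) d b :
  walsh A (ext1 d b) = walsh (restrA A) d * (if ord_max \in A then sgn b else 1) :> R.
Proof.
rewrite /walsh prod_split ffunE unlift_none.
by congr (_ * _); apply: eq_bigr => j _; rewrite ffunE liftK.
Qed.

Definition FF n (g : cube n -> R) (A : {set 'I_n}) := \sum_(d : cube n) g d * walsh A d.

Lemma FS n (A : {set 'I_n.+1}) :
  FF (P a (n:=n.+1)) A = 2 * (if ord_max \in A then a n.+1 * FF (Q a (n:=n)) (restrA A)
                               else FF (P a (n:=n)) (restrA A)) /\
  FF (Q a (n:=n.+1)) A = 2 * (if ord_max \in A then a n.+1 * FF (P a (n:=n)) (restrA A)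
                               else - FF (Q a (n:=n)) (restrA A)).
Proof.
rewrite /FF !sum_cubeS.
case: (ord_max \in A) (walsh_ext1 A) => /= WE.
  by rewrite !mulrA !mulr_sumr; split; apply: eq_bigr => d _;
  rewrite !WE /P /Q !PQ_ext1 /= /sgn; ring.
rewrite mulrN !mulr_sumr -sumrN; split; apply: eq_bigr => d _;
  rewrite !WE /P /Q !PQ_ext1 /= /sgn; ring.
Qed.

Lemma Fsq n (A : {set 'I_n}) :
  FF (P a (n:=n)) A ^+ 2 = (2 ^+ n) ^+ 2 * \prod_(i in A) a (i.+1) ^+ 2 /\
  FF (Q a (n:=n)) A ^+ 2 = (2 ^+ n) ^+ 2 * \prod_(i in A) a (i.+1) ^+ 2.
Proof.
elim: n A => [|n IH] A.
  rewrite /FF /walsh big_mkcond big_ord0.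
  rewrite (big_pred1 [ffun i : 'I_0 => false]); last first.
    by move=> d; symmetry; apply/eqP/ffunP => -[].
  rewrite big_mkcond big_ord0 /P /Q /=.
  by split; rewrite /=; ring.
have [IHP IHQ] := IH (restrA A).
have [-> ->] := FS A.
rewrite prod_split.
have -> : \prod_(j in restrA A) a (lift ord_max j).+1 ^+ 2 =
          \prod_(j in restrA A) a j.+1 ^+ 2.
  by apply: eq_bigr => j _; rewrite lift_max.
case: (ord_max \in A); rewrite !exprMn ?sqrrN ?IHP ?IHQ /= [2 ^+ n.+1]exprS; split; ring.
Qed.

Lemma nK (x : R) : `|x| ^+ 2 = x ^+ 2.
Proof. by rewrite real_normK ?num_real. Qed.

Lemma sqrt_prod m : \prod_(1 <= i < m.+1) Num.sqrt (1 + a i ^+ 2) =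
   Num.sqrt (\prod_(1 <= i < m.+1) (1 + a i ^+ 2)).
Proof.
elim: m => [|m IH]; first by rewrite !big_geq // sqrtr1.
rewrite big_nat_recr // IH [in RHS]big_nat_recr // sqrtrM //.
by apply: prodr_ge0 => i _; rewrite addr_ge0 ?sqr_ge0.
Qed.

Lemma norminf_bounds n (g : cube n -> R) (t : R) : 0 <= t ->
  (forall d, g d ^+ 2 <= 2 * t) -> \sum_d g d ^+ 2 = 2 ^+ n * t ->
  Num.sqrt t <= norminf g <= Num.sqrt 2 * Num.sqrt t.
Proof.
move=> t0 hd hs; apply/andP; split.
  set M := norminf g.
  have hM : forall d, `|g d| <= M.
    by move=> d; exact: (le_bigmax _ (fun d => `|g d|) d).
  have M0 : 0 <= M by apply: le_trans (hM [ffun => false]).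
  rewrite -(ger0_norm M0) -sqrtr_sqr ler_sqrt ?sqr_ge0 //.
  have : \sum_d g d ^+ 2 <= \sum_(d : cube n) M ^+ 2.
    apply: ler_sum => d _; rewrite -nK; have h1 := hM d; have h2 := normr_ge0 (g d); nra.
  rewrite hs sumr_const card_ffun card_bool card_ord -[M ^+ 2 *+ _]mulr_natl natrX.
  by rewrite ler_pM2l // exprn_gt0.
apply: bigmax_le; first by rewrite mulr_ge0 ?sqrtr_ge0.
move=> d _; rewrite -sqrtrM // -sqrtr_sqr ler_sqrt ?mulr_ge0 //.
Qed.

End S.

Theorem proposition1 (R : rcfType) (a : nat -> R)
    (ha : forall i : nat, (1 <= i)%N -> 0 < a i <= 1) (n : nat) (hn : (1 <= n)%N) :
  [/\ forall d : cube n,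
        `|P a d| ^+ 2 + `|Q a d| ^+ 2 = 2 * \prod_(1 <= i < n.+1) (1 + a i ^+ 2),
      norm2 (P a (n:=n)) = \prod_(1 <= i < n.+1) Num.sqrt (1 + a i ^+ 2) /\
      norm2 (Q a (n:=n)) = \prod_(1 <= i < n.+1) Num.sqrt (1 + a i ^+ 2),
      (\prod_(1 <= i < n.+1) Num.sqrt (1 + a i ^+ 2) <= norminf (P a (n:=n))
        <= Num.sqrt 2 * \prod_(1 <= i < n.+1) Num.sqrt (1 + a i ^+ 2)) /\
      (\prod_(1 <= i < n.+1) Num.sqrt (1 + a i ^+ 2) <= norminf (Q a (n:=n))
        <= Num.sqrt 2 * \prod_(1 <= i < n.+1) Num.sqrt (1 + a i ^+ 2))
    & forall A : {set 'I_n},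
        fourier (P a (n:=n)) A ^+ 2 = \prod_(i in A) a (i.+1) ^+ 2 /\
        fourier (Q a (n:=n)) A ^+ 2 = \prod_(i in A) a (i.+1) ^+ 2].
Proof.
have [SP SQ] := sumsq a n.
rewrite sqrt_prod.
set T := \prod_(1 <= i < n.+1) (1 + a i ^+ 2) in SP SQ *.
have T0 : 0 <= T by apply: prodr_ge0 => i _; rewrite addr_ge0 ?sqr_ge0.
have sq : forall d : cube n, P a d ^+ 2 + Q a d ^+ 2 = 2 * T.
  by move=> d; rewrite /P /Q PQ_sq.
have n0 : (2 : R) ^+ n != 0 by rewrite expf_neq0 // pnatr_eq0.
split.
- by move=> d; rewrite !nK sq.
- rewrite /norm2; split.
    by under eq_bigr do rewrite nK; rewrite SP mulKf.
  by under eq_bigr do rewrite nK; rewrite SQ mulKf.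
- split; apply: norminf_bounds => // d; rewrite -(sq d).
    by rewrite lerDl sqr_ge0.
  by rewrite lerDr sqr_ge0.
- move=> A; have [FP FQ] := Fsq a A.
  rewrite /fourier !exprMn -/(FF _ _) FP FQ.
  by rewrite exprVn mulKf // expf_neq0.
Qed.
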